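(* Let $T$ be a tree with at least two vertices. If $\mathcal{M}$ is a maximal $2$-matching of $T$, then there exist leaves $u\neq v$ of $T$ such that $E(P_{u,v})\subseteq\mathcal{M}$, where $P_{u,v}$ is the unique path in $T$ joining $u$ and $v$.
   Context: A $2$-matching of a graph is a set of edges such that every vertex is incident to at most two of them. A $2$-matching $\mathcal{M}$ is maximal if there is no $2$-matching $\mathcal{N}$ with $\mathcal{M}\subsetneq\mathcal{N}$. A leaf is a vertex of degree one. *)

(* Defs.v *)
(* A simple graph is a symmetric irreflexive relation
   g : rel T on a finite type T; edges are 2-element vertex sets. *)
From mathcomp Require Import all_boot.
Set Implicit Arguments. Unset Strict Implicit. Unset Printing Implicit Defensive.

Section Graphs.
Variable T : finType.

Definition simple_graph (g : rel T) : Prop := symmetric g /\ irreflexive g.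

Definition edges (g : rel T) : {set {set T}} :=
  [set [set x; y] | x in T, y in [set z | g x z]].

Definition connected (g : rel T) : Prop := forall x y : T, connect g x y.

Definition acyclic (g : rel T) : Prop :=
  forall c : seq T, uniq c -> 3 <= size c -> ~~ cycle g c.

Definition is_tree (g : rel T) : Prop :=
  simple_graph g /\ connected g /\ acyclic g.

Definition deg (g : rel T) (x : T) : nat := #|[set y | g x y]|.

Definition leaf (g : rel T) (x : T) : Prop := deg g x = 1.

Definition two_matching (g : rel T) (M : {set {set T}}) : Prop :=
  M \subset edges g /\ forall v : T, #|[set f in M | v \in f]| <= 2.

Definition maximal_two_matching (g : rel T) (M : {set {set T}}) : Prop :=
  two_matching g M /\
  forall N : {set {set T}}, two_matching g N -> ~ (M \proper N).

Definition walk_edges (u : T) (p : seq T) : {set {set T}} :=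
  [set [set xy.1; xy.2] | xy in zip (u :: p) p].

End Graphs.

(* Main.v *)
Require Import Defs.
From mathcomp Require Import all_boot zify.
From Stdlib Require Import Classical.
Set Implicit Arguments. Unset Strict Implicit. Unset Printing Implicit Defensive.

Definition dM (T : finType) (M : {set {set T}}) (v : T) := #|[set f in M | v \in f]|.

Lemma edge_form (T : finType) (g : rel T) f x :
  symmetric g -> f \in edges g -> x \in f -> exists y, g x y /\ f = [set x; y].
Proof.
move=> sg /imset2P [a b _]; rewrite inE => gab -> /set2P [->|->].
  by exists b.
by exists a; rewrite sg gab setUC.
Qed.

Lemma dM_le2 (T : finType) (g : rel T) M v : two_matching g M -> dM M v <= 2.
Proof. by case=> _ H; apply: H. Qed.

Lemma dM_pos (T : finType) (M : {set {set T}}) a b : [set a; b] \in M -> 0 < dM M a.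
Proof.
move=> H; rewrite /dM card_gt0; apply/set0Pn; exists [set a; b].
by rewrite inE H set21.
Qed.

Lemma card_add (T : finType) (M : {set {set T}}) e v :
  #|[set f in e |: M | v \in f]| <= (v \in e) + dM M v.
Proof.
case: (boolP (v \in e)) => ve.
  apply: (leq_trans (subset_leq_card (_ : _ \subset e |: [set f in M | v \in f]))).
    apply/subsetP => f; rewrite !inE => /andP [/orP [->|fM] vf] //.
    by rewrite fM vf orbT.
  by rewrite cardsU1 /dM leq_add2r leq_b1.
rewrite add0n; apply: subset_leq_card; apply/subsetP => f; rewrite !inE.
case/andP => /orP [/eqP ->|->] //; by rewrite (negbTE ve).
Qed.

Lemma maxl (T : finType) (g : rel T) M a b :
  maximal_two_matching g M -> g a b -> [set a; b] \notin M ->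
  dM M a <= 1 -> dM M b <= 1 -> False.
Proof.
case=> [[sub Hd] Hmax] gab nM da db.
apply: (Hmax ([set a; b] |: M)).
  split.
    apply/subsetP => f; rewrite !inE => /orP [/eqP ->|fM].
      by apply/imset2P; exists a b; rewrite ?inE.
    exact: (subsetP sub).
  move=> v; apply: (leq_trans (card_add _ _ _)).
  case/boolP: (v \in [set a; b]) => /= vab; last by rewrite add0n; apply: Hd.
  by case/set2P: vab => ->; rewrite add1n ltnS.
by apply: properUr; rewrite sub1set.
Qed.

Lemma dM_ex (T : finType) (g : rel T) M x :
  symmetric g -> two_matching g M -> 0 < dM M x -> exists y, g x y /\ [set x; y] \in M.
Proof.
move=> sg [sub _]; rewrite /dM card_gt0 => /set0Pn [f]; rewrite inE => /andP [fM xf].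
have [y [gxy ef]] := edge_form sg (subsetP sub _ fM) xf.
by exists y; rewrite -ef.
Qed.

Lemma dM_2 (T : finType) (g : rel T) M x y0 :
  symmetric g -> two_matching g M -> dM M x = 2 ->
  exists y, [/\ g x y, [set x; y] \in M & y != y0].
Proof.
move=> sg [sub _] /eqP; rewrite /dM => /cards2P [f1 [f2 [nf E]]].
have : exists2 f, f \in [set f1; f2] & f != [set x; y0].
  case: (eqVneq f1 [set x; y0]) => [e1|n1].
    by exists f2; rewrite ?set22 // -e1 eq_sym.
  by exists f1; rewrite ?set21.
case=> f; rewrite -E inE => /andP [fM xf] nf0.
have [y [gxy ef]] := edge_form sg (subsetP sub _ fM) xf.
exists y; split => //; first by rewrite -ef.
by apply: contraNneq nf0 => eyy; rewrite ef eyy.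
Qed.

Lemma leaf_of (T : finType) (g : rel T) M x y0 :
  irreflexive g -> dM M x = 1 -> [set x; y0] \in M -> g x y0 ->
  (forall w, g x w -> [set x; w] \in M) -> leaf g x.
Proof.
move=> ig d1 m0 g0 Hw; rewrite /leaf /deg.
suff -> : [set y | g x y] = [set y0] by rewrite cards1.
apply/setP => w; rewrite !inE; apply/idP/eqP => [gw|->//].
have /card_le1_eqP H : #|[set f in M | x \in f]| <= 1 by rewrite -/(dM M x) d1.
have e : [set x; w] = [set x; y0].
  by apply: H; rewrite inE ?Hw ?m0 ?set21.
have : w \in [set x; y0] by rewrite -e set22.
case/set2P => // ew; by move: gw; rewrite ew ig.
Qed.

Lemma tree_step (T : finType) (g : rel T) z p y :
  irreflexive g -> acyclic g -> path g z p -> uniq (z :: p) -> g y z ->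
  y != head z p -> y \notin z :: p.
Proof.
move=> ig ac pp up gyz nh; rewrite inE negb_or.
have yz : y != z by apply: contraTneq gyz => ->; rewrite ig.
rewrite yz /=; apply/negP => yp.
case: p pp up nh yp => [|a p'] // pp up nh yp.
set q := a :: p' in pp up yp.
set i := index y q.
have ilt : i < size q by rewrite index_mem.
have i0 : 0 < i by rewrite /i /q /= eq_sym (negbTE nh).
have H1 : uniq (z :: take i.+1 q) by have := take_uniq i.+2 up.
have H2 : 3 <= size (z :: take i.+1 q).
  rewrite /= size_take.
  move: ilt i0; rewrite /q /=; case: ifP => _; lia.
apply: (negP (ac _ H1 H2)).
rewrite /cycle rcons_path; apply/andP; split.
  by move: pp; rewrite -{1}(cat_take_drop i.+1 q) cat_path => /andP [].
by rewrite (take_nth z ilt) last_rcons nth_index.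
Qed.

Definition eok (T : finType) (M : {set {set T}}) (a b : T) :=
  ([set a; b] \in M) || (dM M a == 2).
Definition em (T : finType) (M : {set {set T}}) (a b : T) := [set a; b] \in M.
Definition okw (T : finType) (g : rel T) M z R :=
  [/\ path g z R, uniq (z :: R), path (eok M) z R & 0 < dM M (last z R)].
Fixpoint cntw (T : finType) (M : {set {set T}}) z p :=
  if p is b :: p' then ([set z; b] \notin M) + cntw M b p' else 0.

Lemma size_bound (T : finType) (s : seq T) : uniq s -> size s <= #|T|.
Proof. by move/card_uniqP <-; apply: max_card. Qed.

Lemma L (T : finType) (g : rel T) M :
  symmetric g -> irreflexive g -> acyclic g -> maximal_two_matching g M ->
  forall c, (forall z R, okw g M z R -> cntw M z R <= c) ->
  forall n z R A y, #|T| <= size R + n -> okw g M z R -> cntw M z R = c ->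
  path g z A -> uniq (z :: A) -> path (em M) z A ->
  g z y -> [set y; z] \in M -> y != head z R -> y != head z A ->
  exists u A2, [/\ leaf g u, path g u A2, uniq (u :: A2), path (em M) u A2 &
     last u A2 = last z A /\ exists B, u :: A2 = B ++ [:: y, z & A]].
Proof.
move=> sg ig ac HM c Hmax n; elim: n => [|n IH] z R A y hs [pR uR eR dR] cn pA uA eA gzy my nR nA.
  by have := size_bound uR; move: hs => /= ; lia.
have gyz : g y z by rewrite sg.
have yR := tree_step ig ac pR uR gyz nR.
have yA := tree_step ig ac pA uA gyz nA.
have ok' : okw g M y (z :: R).
  by split; rewrite /= ?gyz ?pR ?yR ?uR /eok ?my //.
have cn' : cntw M y (z :: R) = c by rewrite /= my.
have pA' : path g y (z :: A) by rewrite /= gyz pA.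
have uA' : uniq (y :: z :: A) by rewrite /= -/(uniq (z :: A)) yA uA.
have eA' : path (em M) y (z :: A) by rewrite /= /em my eA.
case: (dM M y =P 2) => [d2|dn2].
  have [y' [gyy' my' ny']] := dM_2 z sg HM.1 d2.
  have hs' : #|T| <= size (z :: R) + n by rewrite /= addSn -addnS.
  have my2 : [set y'; y] \in M by rewrite setUC.
  have [u [A2 [lu pu uu eu [lt [B eB]]]]] :=
     IH y (z :: R) (z :: A) y' hs' ok' cn' pA' uA' eA' gyy' my2 ny' ny'.
  exists u, A2; split => //; split => //; exists (rcons B y').
  by rewrite cat_rcons.
have d1 : dM M y = 1.
  move: (dM_pos my) (dM_le2 y HM.1) dn2; case: (dM M y) => [|[|[|k]]] //.
exists y, (z :: A); split => //; last by split => //; exists [::].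
apply: (leaf_of ig d1 my gyz) => w gyw.
apply/negPn; apply/negP => nw.
have dw : dM M w = 2.
  move: (dM_le2 w HM.1) (maxl HM gyw nw); rewrite d1.
  by case: (dM M w) => [|[|[|k]]] // _ H; case: H.
have wz : w != z by apply: contraNneq nw => ->.
have gwy : g w y by rewrite sg.
have wR' : w \notin y :: z :: R.
  apply: (tree_step ig ac) => //.
    by case: ok'.
  by case: ok'.
have ok'' : okw g M w (y :: z :: R).
  case: ok' => p1 u1 e1 l1.
  by split; rewrite /= ?gwy ?u1 ?wR' ?e1 /eok ?dw ?orbT //; move: p1 e1 => /= -> ->.
have := Hmax _ _ ok''; rewrite /= -/(cntw M y (z :: R)) cn' setUC (negbTE nw) /=.
by rewrite add1n ltnn.
Qed.

Lemma ex_max (P : nat -> Prop) b :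
  (exists n, P n) -> (forall n, P n -> n <= b) -> exists m, P m /\ forall n, P n -> n <= m.
Proof.
move=> [n0 Pn0] Hb.
suff H : forall k, (exists n, P n /\ n <= k) ->
    exists m, P m /\ forall n, P n -> n <= k -> n <= m.
  have [m [Pm Hm]] := H b (ex_intro _ n0 (conj Pn0 (Hb _ Pn0))).
  by exists m; split => // n Pn; apply: Hm => //; apply: Hb.
elim=> [|k IH] [n [Pn nk]].
  by exists n; split => // n' _; rewrite leqn0 => /eqP ->.
case: (classic (P k.+1)) => [Pk|nPk].
  by exists k.+1; split.
have nk' : n <= k.
  rewrite leq_eqVlt in nk; case/orP: nk => [/eqP e|] //; by move: Pn; rewrite e.
have [m [Pm Hm]] := IH (ex_intro _ n (conj Pn nk')).
exists m; split => // n' Pn'; rewrite leq_eqVlt => /orP [/eqP e|]; first by move: Pn'; rewrite e.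
by rewrite ltnS; apply: Hm.
Qed.

Lemma strip (T : finType) (g : rel T) M z R : okw g M z R ->
  exists z2 R2, [/\ okw g M z2 R2, cntw M z2 R2 = cntw M z R &
                 R2 = [::] \/ [set z2; head z2 R2] \notin M].
Proof.
elim: R z => [|b R IH] z ok.
  by exists z, [::]; split => //; left.
case: (boolP ([set z; b] \in M)) => mb; last by exists z, (b :: R); split => //; right.
have okb : okw g M b R.
  by case: ok => /= /andP [_ p] /andP [_ u] /andP [_ e] l; split.
have [z2 [R2 [o2 c2 h2]]] := IH b okb.
by exists z2, R2; split => //; rewrite c2 /= mb.
Qed.

Lemma cnt_size (T : finType) (M : {set {set T}}) z R : cntw M z R <= size R.
Proof.
elim: R z => [|b R IH] z //=; rewrite -add1n leq_add //; first by case: (_ \notin _).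
Qed.

Lemma zipM (T : finType) (M : {set {set T}}) u p :
  path (em M) u p -> forall xy, xy \in zip (u :: p) p -> [set xy.1; xy.2] \in M.
Proof.
elim: p u => [|b p IH] u //= /andP [e pp] xy; rewrite inE => /orP [/eqP -> //|].
exact: IH.
Qed.

Lemma walkM (T : finType) (M : {set {set T}}) u p :
  path (em M) u p -> walk_edges u p \subset M.
Proof.
move=> H; apply/subsetP => f /imsetP [xy xyin ->]; exact: zipM H xy xyin.
Qed.

Lemma last_neq (T : eqType) (u : T) A : uniq (u :: A) -> A != [::] -> u != last u A.
Proof.
case: A => [//|b A'] /= /andP [nu _] _; apply: contraNneq nu => ->; exact: mem_last.
Qed.

Lemma nonnil (T : eqType) (u a b : T) A B C : u :: A = B ++ [:: a, b & C] -> A != [::].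
Proof. by case: A => //; case: B => [|x [|x' B']]. Qed.

Theorem proposition2p3 (T : finType) (g : rel T) (M : {set {set T}}) :
  is_tree g -> 1 < #|T| -> maximal_two_matching g M ->
  exists u v : T, [/\ leaf g u, leaf g v, u != v &
    exists p : seq T, [/\ path g u p, last u p = v, uniq (u :: p) &
                          walk_edges u p \subset M]].
Proof.
move=> [[sg ig] [conn ac]] hT HM.
have TM := HM.1.
have [a da] : exists a, 0 < dM M a.
  have [x [y [_ _ xy]]] := card_gt1P hT.
  have /connectP [p pp ly] := conn x y.
  case: p pp ly => [|x1 p] /=; first by move=> _ e; move: xy; rewrite e eqxx.
  case/andP => gx1 _ _.
  case: (posnP (dM M x)) => [dx0|]; last by exists x.
  case: (posnP (dM M x1)) => [dx10|]; last by exists x1.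
  have nm : [set x; x1] \notin M by apply: contraTN isT => m; move: (dM_pos m); rewrite dx0.
  by case: (maxl HM gx1 nm); rewrite ?dx0 ?dx10.
have ok0 : okw g M a [::] by split.
have [c [[z0 [R0 [okz0 cz0]]] Hc]] :
    exists c, (exists z R, okw g M z R /\ cntw M z R = c) /\
              forall n, (exists z R, okw g M z R /\ cntw M z R = n) -> n <= c.
  apply: (ex_max (b := #|T|)); first by exists 0, a, [::].
  move=> n [z [R [[_ u _ _] <-]]].
  apply: leq_trans (cnt_size _ _ _) _; apply: leq_trans (size_bound u); exact: leqnSn.
have Hmax : forall z R, okw g M z R -> cntw M z R <= c.
  by move=> z R ok; apply: Hc; exists z, R.
have [z [R [ok cn hend]]] := strip okz0.
rewrite cz0 in cn.
have LL := L sg ig ac HM Hmax (n := #|T|) (leq_addl _ _) ok cn.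
have nhead : forall y, [set z; y] \in M -> g z y -> y != head z R.
  move=> y my gy; case: hend => [->|nm] /=.
    by apply: contraTneq gy => ->; rewrite ig.
  by apply: contraNneq nm => <-.
case: (dM M z =P 2) => [d2|dn2].
  have [y1 [g1 m1 _]] := dM_2 z sg TM d2.
  have [y2 [g2 m2 n21]] := dM_2 y1 sg TM d2.
  have m1' : [set y1; z] \in M by rewrite setUC.
  have ny1 : y1 != head z [::] by apply: contraTneq g1 => /= ->; rewrite ig.
  have m2' : [set y2; z] \in M by rewrite setUC.
  have [u1 [A1 [lu1 pu1 uu1 eu1 [lt1 [B1 eB1]]]]] :=
    LL [::] y1 isT isT isT g1 m1' (nhead _ m1 g1) ny1.
  have revA : rev (u1 :: A1) = [:: z, y1 & rev B1] by rewrite eB1 rev_cat.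
  have pr : path g z (y1 :: rev B1).
    have : sorted g (rev (u1 :: A1)).
      by rewrite rev_sorted (@eq_sorted _ _ g) // => p q; rewrite sg.
    by rewrite revA.
  have ur : uniq (z :: y1 :: rev B1) by rewrite -revA rev_uniq.
  have er : path (em M) z (y1 :: rev B1).
    have : sorted (em M) (rev (u1 :: A1)).
      by rewrite rev_sorted (@eq_sorted _ _ (em M)) // => p q; rewrite /em setUC.
    by rewrite revA.
  have lr : last z (y1 :: rev B1) = u1.
    by case: B1 eB1 {revA pr ur er} => [|b B] /= [-> _] //; rewrite rev_cons last_rcons.
  have [u2 [A2 [lu2 pu2 uu2 eu2 [lt2 [B2 eB2]]]]] :=
    LL (y1 :: rev B1) y2 pr ur er g2 m2' (nhead _ m2 g2) n21.
  exists u2, u1; split => //.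
    by rewrite -lr -lt2; apply: last_neq uu2 (nonnil eB2).
  by exists A2; split => //; [rewrite lt2 | apply: walkM].
have Rnil : R = [::].
  case: R ok hend {LL nhead cn} => [//|b R'] [_ _ /= /andP [e _] _] [//|/= nm].
  by move: e; rewrite /eok (negbTE nm) /=; move/eqP.
move: ok cn LL nhead; rewrite Rnil => ok cn LL nhead.
have d1 : dM M z = 1.
  case: ok => _ _ _ /= dz; move: dz (dM_le2 z TM) dn2.
  by case: (dM M z) => [|[|[|k]]].
have [y1 [g1 m1]] : exists y, g z y /\ [set z; y] \in M.
  by apply: dM_ex => //; rewrite d1.
have m1' : [set y1; z] \in M by rewrite setUC.
have ny1 : y1 != head z [::] by apply: contraTneq g1 => /= ->; rewrite ig.
have [u1 [A1 [lu1 pu1 uu1 eu1 [lt1 [B1 eB1]]]]] :=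
  LL [::] y1 isT isT isT g1 m1' ny1 ny1.
have c0 : c = 0 by rewrite -cn.
have lz : leaf g z.
  apply: (leaf_of ig d1 m1 g1) => w gzw.
  apply/negPn; apply/negP => nw.
  have dw : dM M w = 2.
    move: (dM_le2 w TM) (maxl HM gzw nw); rewrite d1.
    by case: (dM M w) => [|[|[|k]]] // _ H; case: H.
  have wz : w != z by apply: contraTneq gzw => ->; rewrite ig.
  have okw' : okw g M w [:: z].
    have gwz : g w z by rewrite sg.
    split => /=; first by rewrite gwz.
    - by rewrite inE wz.
    - by rewrite /eok dw orbT.
    - by case: ok.
  have := Hmax _ _ okw'; rewrite c0 /= setUC (negbTE nw).
  by [].
exists u1, z; split => //.
  by rewrite [X in _ != X](_ : z = last u1 A1) //; apply: last_neq uu1 (nonnil eB1).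
by exists A1; split => //; apply: walkM.
Qed.
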